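(* Let $p>1$, $s\ge r\ge2$, let $Q$ be an $s$-vertex $r$-graph and let $\mathcal P$ be a hereditary property of $r$-graphs with $\lambda^{(p)}(Q,\mathcal P)>0$. For each $n\ge s$ let $H_n\in\mathcal P_n$ satisfy $\lambda^{(p)}(Q,H_n)=\lambda^{(p)}(Q,\mathcal P_n)$ and let $\mathbf x^{(n)}$ be a principal $Q$-eigenvector of $H_n$ (for $p$). Then there exist infinitely many $n$ such that $$\big(\mathbf x^{(n)}_{\min}\big)^{p}\ge\frac1n\Big(1-\frac{p}{(p-1)s\log n}\Big).$$
   Context: An $r$-graph ($r\ge 2$) is a finite hypergraph all of whose edges have exactly $r$ vertices. For $I\subseteq V(H)$, $H[I]$ denotes the induced subhypergraph on $I$. For an $s$-vertex $r$-graph $Q$ and an $r$-graph $H$, $\mathcal N(Q,H)$ is the number of (not necessarily induced) subgraphs of $H$ isomorphic to $Q$. For an $n$-vertex $r$-graph $H$ with vertex set $[n]$ and $\mathbf x\in\mathbb R^n$, $P_{Q,H}(\mathbf x)=s!\sum_{\{i_1,\dots,i_s\}\in\binom{[n]}{s}}\mathcal N(Q,H[\{i_1,\dots,i_s\}])\,x_{i_1}\cdots x_{i_s}$, and for $p\ge1$, $\lambda^{(p)}(Q,H)=\max_{\|\mathbf x\|_p=1}P_{Q,H}(\mathbf x)$. A principal $Q$-eigenvector of $H$ is a nonnegative vector $\mathbf x$ with $\|\mathbf x\|_p=1$ and $P_{Q,H}(\mathbf x)=\lambda^{(p)}(Q,H)$; $\mathbf x_{\min}$ denotes its smallest entry.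 A hereditary property $\mathcal P$ of $r$-graphs is a family of $r$-graphs closed under isomorphism and under taking induced subgraphs; as a standing assumption, whenever $H\in\mathcal P$, the disjoint union of $H$ with an isolated vertex is also in $\mathcal P$. $\mathcal P_n$ is the set of members of $\mathcal P$ with $n$ vertices; $\lambda^{(p)}(Q,\mathcal P_n)=\max\{\lambda^{(p)}(Q,H):H\in\mathcal P_n\}$ and $\lambda^{(p)}(Q,\mathcal P)=\lim_{n\to\infty}\lambda^{(p)}(Q,\mathcal P_n)n^{s/p-s}$ (this limit exists). $\log$ is the natural logarithm. *)

(* Defs.v *)
From HB Require Import structures.
From mathcomp Require Import all_boot all_order all_algebra.
From mathcomp Require Import all_classical all_reals all_analysis.
Set Implicit Arguments. Unset Strict Implicit. Unset Printing Implicit Defensive.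
Import Order.TTheory GRing.Theory Num.Theory.
Local Open Scope ring_scope.

Definition is_rgraph (r n : nat) (E : {set {set 'I_n}}) : Prop :=
  forall e, e \in E -> #|e| = r.

(* N(Q, H[I]) : number of (not necessarily induced) subgraphs of H[I]
   isomorphic to Q, where Q has vertex set 'I_s and #|I| = s.  Such a
   subgraph has vertex set I and is determined by its edge set, which is
   the image of E(Q) under a bijection 'I_s -> I mapping edges of Q into H. *)
Definition img_edges (s n : nat) (f : 'I_s -> 'I_n) (EQ : {set {set 'I_s}})
  : {set {set 'I_n}} := imset (fun e : {set 'I_s} => f @: e) (mem EQ).

Definition NQ (s n : nat) (EQ : {set {set 'I_s}}) (H : {set {set 'I_n}})
  (I : {set 'I_n}) : nat :=
  #|[set img_edges f EQ | f : {ffun 'I_s -> 'I_n} &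
      [&& injectiveb f, f @: [set: 'I_s] == I & img_edges f EQ \subset H]]|.

Definition PQH (R : realType) (s n : nat) (EQ : {set {set 'I_s}})
  (H : {set {set 'I_n}}) (x : 'I_n -> R) : R :=
  (s`!)%:R * \sum_(I : {set 'I_n} | #|I| == s)
      (NQ EQ H I)%:R * \prod_(i in I) x i.

Definition graph_property := forall n : nat, {set {set 'I_n}} -> Prop.

(* hereditary property of r-graphs with the standing assumption:
   - members are r-graphs;
   - closed under isomorphism and induced subgraphs (equivalently, under
     pulling back along injections 'I_m -> 'I_n);
   - closed under adding an isolated vertex. *)
Definition hereditary (r : nat) (P : graph_property) : Prop :=
  [/\ (forall n H, P n H -> is_rgraph r H),
      (forall m n (f : 'I_m -> 'I_n), injective f ->
         forall H, P n H -> P m [set e : {set 'I_m} | f @: e \in H]) &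
      (forall n H, P n H -> P n.+1 (imset (fun e : {set 'I_n} => widen_ord (leqnSn n) @: e) (mem H)))].

Local Open Scope classical_set_scope.

Definition pnorm (R : realType) (n : nat) (p : R) (x : 'I_n -> R) : R :=
  (\sum_(i < n) `|x i| `^ p) `^ (p^-1).

Definition lamQH (R : realType) (p : R) (s n : nat) (EQ : {set {set 'I_s}})
  (H : {set {set 'I_n}}) : R :=
  sup [set PQH EQ H x | x in [set x : 'I_n -> R | pnorm p x = 1]].

Definition principal_eigvec (R : realType) (p : R) (s n : nat)
  (EQ : {set {set 'I_s}}) (H : {set {set 'I_n}}) (x : 'I_n -> R) : Prop :=
  (forall i, 0 <= x i) /\ pnorm p x = 1 /\ PQH EQ H x = lamQH p EQ H.

Definition xmin (R : realType) (n : nat) (x : 'I_n -> R) : R := inf (range x).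

Definition lamQPn (R : realType) (p : R) (s : nat) (EQ : {set {set 'I_s}})
  (P : graph_property) (n : nat) : R :=
  sup [set lamQH p EQ H | H in [set H | P n H]].

(* the normalized sequence whose limit is lambda^(p)(Q, P) *)
Definition lamQP_seq (R : realType) (p : R) (s : nat) (EQ : {set {set 'I_s}})
  (P : graph_property) (n : nat) : R :=
  lamQPn p EQ P n * (n%:R) `^ (s%:R / p - s%:R).

(* Main.v *)
Require Import Defs.
From HB Require Import structures.
From mathcomp Require Import all_boot all_order all_algebra.
From mathcomp Require Import all_classical all_reals all_analysis.
Import Order.TTheory GRing.Theory Num.Theory numFieldNormedType.Exports.
Local Open Scope ring_scope.
Local Open Scope classical_set_scope.
Set Implicit Arguments. Unset Strict Implicit. Unset Printing Implicit Defensive.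
From mathcomp Require Import ring lra zify.
From Stdlib Require Import Lia.

Section Part1.
Variable R : realType.
Variables (s : nat) (EQ : {set {set 'I_s}}).

Lemma PQH_ge0 n (H : {set {set 'I_n}}) (x : 'I_n -> R) :
  (forall i, 0 <= x i) -> 0 <= PQH EQ H x.
Proof.
move=> x0; rewrite /PQH mulr_ge0 // sumr_ge0 // => I _.
by rewrite mulr_ge0 // prodr_ge0.
Qed.

Lemma PQH_scale n (H : {set {set 'I_n}}) (x : 'I_n -> R) c :
  PQH EQ H (fun i => c * x i) = c ^+ s * PQH EQ H x.
Proof.
rewrite /PQH mulrCA; congr (_ * _); rewrite mulr_sumr; apply: eq_bigr => I /eqP HI.
by rewrite prodrMl HI mulrCA.
Qed.

Definition Bd n : R := (s`!)%:R * \sum_(I : {set 'I_n} | #|I| == s) (#|{ffun 'I_s -> 'I_n}|)%:R.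

Lemma Bd_ge0 n : 0 <= Bd n.
Proof. by rewrite /Bd mulr_ge0 // sumr_ge0. Qed.

Lemma NQ_le n (H : {set {set 'I_n}}) I : (NQ EQ H I <= #|{ffun 'I_s -> 'I_n}|)%N.
Proof. by rewrite /NQ (leq_trans (leq_imset_card _ _)) // max_card. Qed.

Lemma PQH_le n (H : {set {set 'I_n}}) (x : 'I_n -> R) :
  (forall i, `|x i| <= 1) -> PQH EQ H x <= Bd n.
Proof.
move=> x1; rewrite /PQH /Bd ler_wpM2l // ler_sum // => I _.
have hp : \prod_(i in I) x i <= 1.
  apply: le_trans (ler_norm _) _; rewrite normr_prod prodr_ile1 // => i _.
  by rewrite normr_ge0 x1.
apply: le_trans (_ : (NQ EQ H I)%:R * 1 <= _); first by rewrite ler_wpM2l.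
by rewrite mulr1 ler_nat NQ_le.
Qed.

Variable p : R.
Hypothesis p_gt0 : 0 < p.

Lemma pnorm1 n (x : 'I_n -> R) : pnorm p x = 1 -> \sum_(i < n) `|x i| `^ p = 1.
Proof.
rewrite /pnorm => h.
have S0 : 0 <= \sum_(i < n) `|x i| `^ p by rewrite sumr_ge0 // => i _; rewrite powR_ge0.
have e : p^-1 * p = 1 by rewrite mulVf // gt_eqF.
by rewrite -[LHS](@powRr1 _ _ S0) -{1}e powRrM h powR1.
Qed.

Lemma sum1_pnorm n (x : 'I_n -> R) : \sum_(i < n) `|x i| `^ p = 1 -> pnorm p x = 1.
Proof. by rewrite /pnorm => ->; rewrite powR1. Qed.

Lemma pnorm1_le1 n (x : 'I_n -> R) : pnorm p x = 1 -> forall i, `|x i| <= 1.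
Proof.
move=> /pnorm1 h i.
have hi : `|x i| `^ p <= 1.
  rewrite -h (bigD1 i) //= lerDl sumr_ge0 // => j _; rewrite powR_ge0.
rewrite leNgt; apply/negP => hlt.
have h1 : 1 `^ p < `|x i| `^ p.
  by apply: (@gt0_ltr_powR R p p_gt0) => //; rewrite nnegrE.
by move: h1; rewrite powR1 ltNge hi.
Qed.

Lemma lamQH_ub n (H : {set {set 'I_n}}) (y : 'I_n -> R) :
  pnorm p y = 1 -> PQH EQ H y <= lamQH p EQ H.
Proof.
move=> hy; apply: sup_upper_bound; last by exists y.
split; first by exists (PQH EQ H y); exists y.
exists (Bd n) => _ [z /= hz <-]; apply: PQH_le; exact: pnorm1_le1.
Qed.

Lemma lamQH_le n (H : {set {set 'I_n}}) : lamQH p EQ H <= Bd n.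
Proof.
rewrite /lamQH; case: (pselect ([set PQH EQ H x | x in [set x : 'I_n -> R | pnorm p x = 1]] !=set0)) => hne.
  apply: ge_sup => // _ [z /= hz <-]; apply: PQH_le; exact: pnorm1_le1.
have -> : [set PQH EQ H x | x in [set x : 'I_n -> R | pnorm p x = 1]] = set0.
  by apply/eqP/negPn/negP => /set0P.
by rewrite sup0 Bd_ge0.
Qed.

Lemma lamQPn_ub (P : graph_property) n (G : {set {set 'I_n}}) :
  P n G -> lamQH p EQ G <= lamQPn p EQ P n.
Proof.
move=> hG; apply: sup_upper_bound; last by exists G.
split; first by exists (lamQH p EQ G); exists G.
by exists (Bd n) => _ [K /= _ <-]; apply: lamQH_le.
Qed.

Lemma PQH_le_scale n (H : {set {set 'I_n}}) (y : 'I_n -> R) :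
  (forall i, 0 <= y i) -> 0 < \sum_(i < n) y i `^ p ->
  PQH EQ H y <= lamQH p EQ H * (\sum_(i < n) y i `^ p) `^ (s%:R / p).
Proof.
move=> y0; set S := \sum_(i < n) _ => S0.
set c := S `^ (- p^-1).
have c0 : 0 <= c by rewrite powR_ge0.
have hz : pnorm p (fun i => c * y i) = 1.
  apply: sum1_pnorm.
  under eq_bigr => i _ do rewrite ger0_norm ?mulr_ge0 // powRM //.
  rewrite -mulr_sumr /c -powRrM mulNr mulVf ?gt_eqF // powR_inv1 ?ltW //.
  by rewrite mulVf ?gt_eqF.
have := lamQH_ub H hz; rewrite PQH_scale.
have -> : c ^+ s = (S `^ (s%:R / p))^-1.
  rewrite -powR_mulrn // /c -powRrM -powRN; congr (_ `^ _).
  by rewrite mulrC mulrN.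
have Sg : 0 < S `^ (s%:R / p) by rewrite powR_gt0.
by rewrite mulrC -ler_pdivrMr ?invr_gt0 // invrK.
Qed.

End Part1.


Local Close Scope classical_set_scope.
Section Part2.
Variable R : realType.
Variables (s : nat) (EQ : {set {set 'I_s}}).
Variables (n : nat) (k : 'I_n.+1) (H : {set {set 'I_n.+1}}).

Definition Gdel : {set {set 'I_n}} := [set e : {set 'I_n} | lift k @: e \in H].

Definition Apart (x : 'I_n.+1 -> R) : R := (s`!)%:R *
  \sum_(I : {set 'I_n.+1} | (#|I| == s) && (k \notin I)) (NQ EQ H I)%:R * \prod_(i in I) x i.
Definition Dpart (x : 'I_n.+1 -> R) : R := (s`!)%:R *
  \sum_(I : {set 'I_n.+1} | (#|I| == s) && (k \in I)) (NQ EQ H I)%:R * \prod_(i in I :\ k) x i.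

Lemma PQH_split x : PQH EQ H x = Apart x + x k * Dpart x.
Proof.
rewrite /PQH /Apart /Dpart (bigID (fun I : {set 'I_n.+1} => k \in I) (fun I : {set 'I_n.+1} => #|I| == s)) /= addrC mulrDr; congr (_ + _).
rewrite mulrCA; congr (_ * _); rewrite mulr_sumr; apply: eq_bigr => I /andP[_ kI].
rewrite (bigD1 k) //= mulrCA; congr (_ * (_ * _)); apply: eq_bigl => i.
by rewrite in_setD1 andbC.
Qed.

Lemma Apart_eq x y : (forall i, i != k -> x i = y i) -> Apart x = Apart y.
Proof.
move=> h; rewrite /Apart; congr (_ * _); apply: eq_bigr => I /andP[_ kI].
congr (_ * _); apply: eq_bigr => i iI; apply: h.
by apply: contraNneq kI => <-.
Qed.

Lemma Dpart_eq x y : (forall i, i != k -> x i = y i) -> Dpart x = Dpart y.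
Proof.
move=> h; rewrite /Dpart; congr (_ * _); apply: eq_bigr => I _.
congr (_ * _); apply: eq_bigr => i; rewrite in_setD1 => /andP[ik _]; exact: h.
Qed.

Lemma Dpart_ge0 x : (forall i, 0 <= x i) -> 0 <= Dpart x.
Proof.
move=> x0; rewrite /Dpart mulr_ge0 // sumr_ge0 // => I _.
by rewrite mulr_ge0 // prodr_ge0.
Qed.

Lemma NQ_lift (j0 : 'I_n) (J : {set 'I_n}) : (NQ EQ H (lift k @: J) <= NQ EQ Gdel J)%N.
Proof.
rewrite /NQ.
pose psi := fun E : {set {set 'I_n}} => [set lift k @: e | e : {set 'I_n} in E].
apply: (leq_trans _ (leq_imset_card psi _)).
apply: subset_leq_card. apply/fintype.subsetP => E /imsetP[f]; rewrite inE => /and3P[injf /eqP imf sub] ->.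
have fk i : k != f i.
  apply/negP => /eqP fik; have : f i \in f @: [set: 'I_s] by apply: imset_f.
  by rewrite imf -fik => /imsetP[j _ e]; move: (neq_lift k j); rewrite -e eqxx.
pose g := [ffun i => odflt j0 (unlift k (f i))].
have gK i : lift k (g i) = f i.
  by rewrite ffunE; case: (unlift_some (fk i)) => j e1 e2; rewrite e2 /= e1.
have ginj : injective g.
  move=> i1 i2 e; apply: (injectiveP _ injf); by rewrite -!gK e.
have gim : g @: [set: 'I_s] = J.
  apply: (imset_inj (@lift_inj _ k)); rewrite -imset_comp -imf.
  by apply: eq_imset => i /=; rewrite gK.
have imgK (e : {set 'I_s}) : lift k @: (g @: e) = f @: e.
  by rewrite -imset_comp; apply: eq_imset => i /=; rewrite gK.
apply/imsetP; exists (img_edges g EQ).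
  apply/imsetP; exists g => //; rewrite inE; apply/and3P; split.
  - by apply/injectiveP.
  - by rewrite gim.
  apply/fintype.subsetP => e' /imsetP[e eE ->]; rewrite inE imgK; apply: (fintype.subsetP sub).
  by rewrite /img_edges; apply: imset_f.
rewrite /psi /img_edges -imset_comp; apply: eq_imset => e /=; by rewrite imgK.
Qed.

Lemma Apart_le (j0 : 'I_n) x : (forall i, 0 <= x i) ->
  Apart x <= PQH EQ Gdel (fun j => x (lift k j)).
Proof.
move=> x0; rewrite /Apart /PQH ler_wpM2l //.
have -> : \sum_(I : {set 'I_n.+1} | (#|I| == s) && (k \notin I)) (NQ EQ H I)%:R * \prod_(i in I) x i
   = \sum_(I in [set lift k @: J | J : {set 'I_n} in [set J : {set 'I_n} | #|J| == s]])
       (NQ EQ H I)%:R * \prod_(i in I) x i.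
  apply: eq_bigl => I; apply/andP/imsetP.
  - move=> [/eqP cI kI].
    have eqI : I = lift k @: [set j | lift k j \in I].
      apply/setP => i; apply/idP/imsetP.
      + move=> iI; have ki : k != i by apply: contraNneq kI => ->.
        case: (unlift_some ki) => j e1 _; exists j; first by rewrite inE -e1.
        exact: e1.
      + by move=> [j]; rewrite inE => jI ->.
    exists [set j | lift k j \in I] => //.
    by rewrite inE -(card_imset _ (@lift_inj _ k)) -eqI cI.
  - move=> [J]; rewrite inE => /eqP cJ ->; split.
      by rewrite (card_imset _ (@lift_inj _ k)) cJ.
    by apply/imsetP => [[j _ e]]; move: (neq_lift k j); rewrite -e eqxx.
rewrite big_imset /=; last by move=> J1 J2 _ _; apply: imset_inj; apply: lift_inj.
rewrite (eq_bigl (fun J : {set 'I_n} => #|J| == s)); last by move=> J; rewrite inE.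
apply: ler_sum => J _.
rewrite big_imset /=; last by move=> a b _ _; apply: lift_inj.
apply: ler_wpM2r; first by rewrite prodr_ge0.
by rewrite ler_nat (NQ_lift j0).
Qed.

End Part2.

Local Open Scope classical_set_scope.


Section Part3.
Variable R : realType.

Lemma ln_le_sub1 (b : R) : 0 < b -> ln b <= b - 1.
Proof.
move=> b0; have := @le_ln1Dx R (b - 1); rewrite [1 + _]addrC subrK; apply.
lra.
Qed.

Lemma powR_le_expR (b a : R) : 0 < b -> 0 <= a -> b `^ a <= expR (a * (b - 1)).
Proof.
move=> b0 a0; rewrite /powR gt_eqF // ler_expR ler_wpM2l //; exact: ln_le_sub1.
Qed.

Lemma expR_le_inv (z : R) : z < 1 -> expR z <= (1 - z)^-1.
Proof.
move=> z1; rewrite -[expR z]invrK lef_pV2 ?posrE ?invr_gt0 ?expR_gt0 ?subr_gt0 //.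
by rewrite -expRN; have := expR_ge1Dx (- z); rewrite addrC.
Qed.

Lemma le_eps (M C : R) : 0 <= M -> 0 <= C -> forall a, 0 < a ->
  (forall d, 0 < d -> a * d < 1 -> M * (1 - a * d) <= C) -> M <= C.
Proof.
move=> M0 C0 a a0 h; rewrite leNgt; apply/negP => CM.
have M0' : 0 < M by apply: le_lt_trans CM.
pose d := (M - C) / (2 * M * a).
have dE : a * d = (M - C) / (2 * M) by rewrite /d; field; rewrite ?gt_eqF.
have d0 : 0 < d by rewrite /d divr_gt0 ?subr_gt0 // !mulr_gt0.
have ad1 : a * d < 1.
  rewrite dE ltr_pdivrMr ?mulr_gt0 //; lra.
have := h d d0 ad1; rewrite dE.
have -> : M * (1 - (M - C) / (2 * M)) = (M + C) / 2 by field; rewrite gt_eqF.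
lra.
Qed.

Variables (s : nat) (EQ : {set {set 'I_s}}) (p : R).
Variables (n : nat) (k : 'I_n.+1) (H : {set {set 'I_n.+1}}).

Lemma kkt (x : 'I_n.+1 -> R) : 1 < p -> (forall i, 0 <= x i) ->
  \sum_(i < n.+1) x i `^ p = 1 -> PQH EQ H x = lamQH p EQ H ->
  x k * Dpart EQ k H x <= s%:R * lamQH p EQ H * x k `^ p.
Proof.
move=> p1 x0 S1 hPQ.
have p0 : 0 < p by lra.
have s0 : 0 <= s%:R :> R by rewrite ler0n.
set lam := lamQH p EQ H; set D := Dpart EQ k H x; set u := x k.
have lam0 : 0 <= lam by rewrite /lam -hPQ PQH_ge0.
have D0 : 0 <= D by apply: Dpart_ge0.
have u0 : 0 <= u by exact: x0.
set T := u `^ p.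
have T0 : 0 <= T by rewrite powR_ge0.
have Srest : \sum_(i < n.+1 | i != k) x i `^ p = 1 - T.
  by have e := S1; rewrite (bigD1 k) //= in e; rewrite /T /u; lra.
have T1 : T <= 1.
  have : 0 <= \sum_(i < n.+1 | i != k) x i `^ p by rewrite sumr_ge0 // => i _; rewrite powR_ge0.
  lra.
have [->|un0] := eqVneq u 0; first by rewrite mul0r mulr_ge0 // mulr_ge0.
have u0' : 0 < u by rewrite lt_def un0.
have hps : 0 < p + s%:R by lra.
apply: (@le_eps (u * D) (s%:R * lam * T) (mulr_ge0 u0 D0) (mulr_ge0 (mulr_ge0 s0 lam0) T0) (p + s%:R) hps).
move=> d d0 hd.
pose y := fun i => if i == k then u * (1 + d) else x i.
have y0 i : 0 <= y i by rewrite /y; case: ifP => _ //; rewrite mulr_ge0 //; lra.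
have yoff i : i != k -> y i = x i by rewrite /y => /negbTE ->.
have yk : y k = u * (1 + d) by rewrite /y eqxx.
have PQy : PQH EQ H y = lam + u * d * D.
  rewrite (PQH_split EQ k H y) (Apart_eq EQ H yoff) (Dpart_eq EQ H yoff) yk.
  have := PQH_split EQ k H x; rewrite hPQ -/lam -/D -/u => ->.
  by rewrite /D; ring.
set B := (1 + d) `^ p.
have B1 : 1 <= B.
  have h1 : (1:R) `^ p = 1 by rewrite powR1.
  rewrite /B -{1}h1; apply: ge0_ler_powR; rewrite ?nnegrE; lra.
have Sy : \sum_(i < n.+1) y i `^ p = 1 + T * (B - 1).
  rewrite (bigD1 k) //= yk powRM ?(ltW u0') //; last lra.
  rewrite (eq_bigr (fun i => x i `^ p)); last by move=> i /yoff ->.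
  rewrite Srest -/T -/B; ring.
have Sy0 : 0 < \sum_(i < n.+1) y i `^ p by rewrite Sy; nra.
have := PQH_le_scale EQ p0 H y0 Sy0; rewrite PQy Sy -/lam.
set e := s%:R / p.
have e0 : 0 <= e by rewrite /e divr_ge0 //; lra.
have ep : e * p = s%:R by rewrite /e mulrAC -mulrA mulfV ?gt_eqF // mulr1.
have pd1 : p * d < 1.
  have : 0 <= s%:R * d :> R by rewrite mulr_ge0 //; lra.
  lra.
have hB : B <= (1 - p * d)^-1.
  apply: le_trans (expR_le_inv pd1); apply: le_trans (powR_le_expR _ _) _; try lra.
  by rewrite [1 + d - 1]addrC addKr.
move=> hmain.
set q := 1 - p * d.
have q0 : 0 < q by rewrite /q; lra.
have hBq : B - 1 <= p * d / q.
  have -> : p * d / q = q^-1 - 1 by rewrite /q; field; rewrite gt_eqF.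
  by rewrite lerD2r.
have TB0 : 0 <= T * (B - 1) by rewrite mulr_ge0 //; lra.
have hS : (1 + T * (B - 1)) `^ e <= expR (e * (T * (B - 1))).
  apply: le_trans (powR_le_expR _ _) _ => //; first lra.
  by rewrite [1 + _ - 1]addrC addKr.
set m := q - s%:R * T * d.
have m0 : 1 - (p + s%:R) * d <= m.
  rewrite /m /q; have : s%:R * T * d <= s%:R * d by rewrite ler_wpM2r ?ler_piMr //; lra.
  lra.
have m0' : 0 < m by lra.
set w := s%:R * T * d / q.
have hw : e * (T * (B - 1)) <= w.
  rewrite /w -ep.
  have -> : e * p * T * d / q = e * (T * (p * d / q)) by field; rewrite gt_eqF.
  by rewrite ler_wpM2l // ler_wpM2l.
have w1 : w < 1.
  rewrite /w ltr_pdivrMr // mul1r; move: m0'; rewrite /m; lra.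
have hE : expR (e * (T * (B - 1))) <= q / m.
  apply: le_trans (_ : expR w <= _); first by rewrite ler_expR.
  apply: le_trans (expR_le_inv w1) _.
  have -> : (1 - w)^-1 = q / m by rewrite /w /m; field; rewrite !gt_eqF.
  by [].
have h2 : lam + u * d * D <= lam * (q / m).
  apply: le_trans hmain _; apply: ler_wpM2l => //; exact: le_trans hS hE.
have h3 : u * D * m <= lam * (s%:R * T).
  have h2' := h2; rewrite -(ler_pM2r m0') -[lam * (q / m) * m]mulrA divfK ?gt_eqF // in h2'.
  rewrite -(ler_pM2r d0); move: h2'; rewrite /m; nra.
have h4 : u * D * (1 - (p + s%:R) * d) <= u * D * m by rewrite ler_wpM2l // mulr_ge0.
apply: le_trans h4 _; apply: le_trans h3 _.
by rewrite mulrA (mulrC lam).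
Qed.




Lemma deletion (r : nat) (P : graph_property) (j0 : 'I_n) (x : 'I_n.+1 -> R) :
  1 < p -> hereditary r P -> P n.+1 H -> principal_eigvec p EQ H x -> x k `^ p < 1 ->
  lamQH p EQ H * (1 - s%:R * x k `^ p) <=
    lamQPn p EQ P n * (1 - x k `^ p) `^ (s%:R / p).
Proof.
move=> p1 [_ hP2 _] hH [x0 [hn hPQ]] T1.
have p0 : 0 < p by lra.
have S1 : \sum_(i < n.+1) x i `^ p = 1.
  by rewrite -(pnorm1 p0 hn); apply: eq_bigr => i _; rewrite ger0_norm.
have hk := kkt p1 x0 S1 hPQ.
have hsplit := PQH_split EQ k H x.
have hA := @Apart_le _ _ EQ _ k H j0 x x0.
have Sx' : \sum_(j < n) x (lift k j) `^ p = 1 - x k `^ p.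
  by move: S1; rewrite (bigD1_ord k) //=; lra.
have Sx'0 : 0 < \sum_(j < n) x (lift k j) `^ p by rewrite Sx'; lra.
have hsc := PQH_le_scale EQ p0 (Gdel k H) (fun j => x0 (lift k j)) Sx'0.
have hG : P n (Gdel k H) := hP2 n n.+1 (lift k) (@lift_inj _ k) H hH.
have hl := lamQPn_ub EQ p0 hG.
rewrite Sx' in hsc.
have e0 : 0 <= (1 - x k `^ p) `^ (s%:R / p) by rewrite powR_ge0.
apply: le_trans (_ : lamQH p EQ (Gdel k H) * (1 - x k `^ p) `^ (s%:R / p) <= _); last first.
  by rewrite ler_wpM2r.
apply: le_trans hsc; apply: le_trans hA.
move: hsplit hk; rewrite hPQ; lra.
Qed.

End Part3.


Section Part4.
Variable R : realType.

Lemma xmin_attained n (x : 'I_n -> R) : (0 < n)%N -> exists k, xmin x = x k.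
Proof.
move=> hn; pose i0 := Ordinal hn.
case: (@arg_minP _ _ _ i0 predT x isT) => k _ hk.
have lb : lbound (range x) (x k) by move=> _ [i _ <-]; exact: hk.
exists k; apply/le_anti/andP; split.
  by apply: (ge_inf (E := range x)); [exists (x k) | exists k].
by apply: lb_le_inf => //; exists (x k); exists k.
Qed.

Lemma key_ineq (a S nn mm Ln Lm dLL : R) :
  0 <= a -> 3 <= mm -> nn = mm + 1 -> 0 < Lm -> 0 < Ln ->
  nn^-1 <= Ln - Lm -> Ln - Lm <= mm^-1 -> dLL <= (Ln - Lm) / Lm ->
  2 * Ln <= 3 * Lm -> 4 * S * Ln <= nn ->
  a / nn - (nn * Ln)^-1 + 2 * S / nn ^+ 2 <= a * (Ln - Lm) - dLL / 4.
Proof.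
move=> a0 m3 hnm Lm0 Ln0 F1 F2 F3 F4 F5.
have m0 : 0 < mm by lra.
have n0 : 0 < nn by lra.
have h1 : dLL <= (mm * Lm)^-1.
  rewrite invfM; apply: le_trans F3 _.
  by rewrite ler_wpM2r // invr_ge0 ltW.
have h2 : (mm * Lm)^-1 <= 2 * (nn * Ln)^-1.
  have -> : 2 * (nn * Ln)^-1 = (nn * Ln / 2)^-1 by field; rewrite !gt_eqF.
  rewrite lef_pV2 ?posrE ?mulr_gt0 ?divr_gt0 //.
  have : 0 <= (mm - 3) * Ln by rewrite mulr_ge0 //; lra.
  have : 0 <= mm * (3 * Lm - 2 * Ln) by rewrite mulr_ge0 //; lra.
  rewrite hnm; nra.
have h3 : 2 * S / nn ^+ 2 <= (nn * Ln)^-1 / 2.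
  have -> : 2 * S / nn ^+ 2 = (4 * S * Ln) * ((nn * Ln)^-1 / 2 / nn).
    by field; rewrite !gt_eqF.
  apply: le_trans (_ : nn * ((nn * Ln)^-1 / 2 / nn) <= _).
    by rewrite ler_wpM2r // !divr_ge0 // ?invr_ge0 ltW // mulr_gt0.
  by rewrite mulrC divfK ?gt_eqF.
have h4 : a / nn <= a * (Ln - Lm) by rewrite ler_wpM2l.
lra.
Qed.

Lemma poly_aux (m : R) : 3 <= m -> (m + 1) ^+ 2 <= m ^+ 3.
Proof.
move=> m3.
have h1 : 0 <= m * (m - 3) * (m + 1) by rewrite !mulr_ge0 //; lra.
have h2 : 3 * 3 <= m * m by apply: ler_pM => //; lra.
have e : m ^+ 3 - (m + 1) ^+ 2 = m * (m - 3) * (m + 1) + (m * m - 9) + (m - 3) + 11 by ring.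
rewrite -subr_ge0 e; lra.
Qed.

Lemma step_real (p sr lamn lamm t nn mm : R) :
  1 < p -> 1 <= sr -> 0 < lamn -> 0 < lamm ->
  lamn * (1 - sr * t) <= lamm * (1 - t) `^ (sr / p) ->
  0 <= t -> t < nn^-1 * (1 - p / ((p - 1) * sr * ln nn)) ->
  nn = mm + 1 -> 3 <= mm -> 2 * sr <= nn -> 32 * sr ^+ 4 <= nn ->
  ln lamn - (sr - sr / p) * ln nn + ln (ln nn) / 4 <=
  ln lamm - (sr - sr / p) * ln mm + ln (ln mm) / 4.
Proof.
move=> p1 s1 ln0 lm0 hdel t0 tu hnm m3 n2s n32.
have p0 : 0 < p by lra.
have m0 : 0 < mm by lra.
have n0 : 0 < nn by lra.
set a := sr - sr / p.
have a0 : 0 <= a.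
  rewrite /a subr_ge0 ler_pdivrMr // ler_peMr //; [lra|lra].
set Ln := ln nn; set Lm := ln mm.
have Lm0 : 0 < Lm by apply: ln_gt0; lra.
have Ln0 : 0 < Ln by apply: ln_gt0; lra.
have c0 : 0 <= p / ((p - 1) * sr * Ln).
  by rewrite divr_ge0 ?mulr_ge0 //; lra.
have tn : t <= nn^-1.
  apply: ltW; apply: lt_le_trans tu _.
  rewrite ger_pMr ?invr_gt0 //; lra.
have st : sr * t <= 2^-1.
  apply: le_trans (_ : sr * nn^-1 <= _); first by rewrite ler_wpM2l //; lra.
  rewrite ler_pdivrMr // ler_pdivlMl //; lra.
have st0 : 0 <= sr * t by rewrite mulr_ge0 //; lra.
have hp1 : (1 - t) `^ (sr / p) <= expR (sr / p * (- t)).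
  apply: le_trans (powR_le_expR _ _) _.
  - have : sr * t <= 2^-1 by [].
    have : t <= sr * t by rewrite ler_peMl //.
    lra.
  - by rewrite divr_ge0 //; lra.
  by rewrite [1 - t - 1]addrC addKr.
have hp2 : (1 - sr * t)^-1 <= expR (sr * t + 2 * (sr * t) ^+ 2).
  apply: le_trans (expR_ge1Dx _); rewrite addrA.
  set y := sr * t in st st0 *.
  rewrite -[X in X <= _]mul1r ler_pdivrMr; last lra.
  have : 0 <= y ^+ 2 * (1 - 2 * y) by rewrite mulr_ge0 ?sqr_ge0 //; lra.
  nra.
have hlam : lamn <= lamm * expR (a * t + 2 * (sr * t) ^+ 2).
  have s1t : 0 < 1 - sr * t by lra.
  have e1 : lamn = lamn * (1 - sr * t) * (1 - sr * t)^-1 by rewrite mulfK ?gt_eqF.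
  rewrite e1; apply: le_trans (_ : lamm * (1 - t) `^ (sr / p) * (1 - sr * t)^-1 <= _).
    rewrite ler_wpM2r // ?invr_ge0 ?ltW //.
  rewrite (_ : a * t + 2 * (sr * t) ^+ 2 = sr / p * (- t) + (sr * t + 2 * (sr * t) ^+ 2)); last first.
    by rewrite /a; ring.
  rewrite expRD -mulrA; apply: ler_wpM2l; first exact: ltW.
  apply: ler_pM hp1 hp2; first exact: powR_ge0.
  by rewrite invr_ge0 ltW.
have s0 : 0 < sr by lra.
have hE : a * t + 2 * (sr * t) ^+ 2 <= a / nn - (nn * Ln)^-1 + 2 * sr ^+ 2 / nn ^+ 2.
  have e1 : a / nn - (nn * Ln)^-1 = a * (nn^-1 * (1 - p / ((p - 1) * sr * Ln))).
    rewrite /a; field.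
    by rewrite !gt_eqF ?subr_gt0 //; lra.
  have e2 : 2 * sr ^+ 2 / nn ^+ 2 = 2 * sr ^+ 2 * (nn^-1 * nn^-1).
    by rewrite -exprVn expr2.
  rewrite e1 e2; apply: lerD; first by rewrite ler_wpM2l // ltW.
  rewrite exprMn -mulrA ler_wpM2l //.
  rewrite ler_wpM2l ?sqr_ge0 //.
  have ni0 : 0 <= nn^-1 by rewrite invr_ge0 ltW.
  by rewrite expr2; apply: ler_pM.
have hln : ln lamn <= ln lamm + (a / nn - (nn * Ln)^-1 + 2 * sr ^+ 2 / nn ^+ 2).
  have hpos : 0 < lamm * expR (a / nn - (nn * Ln)^-1 + 2 * sr ^+ 2 / nn ^+ 2).
    by rewrite mulr_gt0 // expR_gt0.
  have : ln lamn <= ln (lamm * expR (a / nn - (nn * Ln)^-1 + 2 * sr ^+ 2 / nn ^+ 2)).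
    rewrite ler_ln ?posrE //.
    apply: le_trans hlam _; apply: ler_wpM2l; first exact: ltW.
    by rewrite ler_expR.
  by rewrite lnM ?posrE ?expR_gt0 // expRK.
have F1 : nn^-1 <= Ln - Lm.
  have := ln_le_sub1 (divr_gt0 m0 n0); rewrite ln_div ?posrE // -/Ln -/Lm.
  have -> : mm / nn - 1 = - nn^-1 by rewrite hnm; field; rewrite gt_eqF //; lra.
  lra.
have F2 : Ln - Lm <= mm^-1.
  have := ln_le_sub1 (divr_gt0 n0 m0); rewrite ln_div ?posrE // -/Ln -/Lm.
  by have -> : nn / mm - 1 = mm^-1 by rewrite hnm; field; rewrite gt_eqF.
have F3 : ln Ln - ln Lm <= (Ln - Lm) / Lm.
  have := ln_le_sub1 (divr_gt0 Ln0 Lm0); rewrite ln_div ?posrE //.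
  by have -> : Ln / Lm - 1 = (Ln - Lm) / Lm by field; rewrite gt_eqF.
have F4 : 2 * Ln <= 3 * Lm.
  have h : nn ^+ 2 <= mm ^+ 3 by rewrite hnm; exact: poly_aux.
  have h' : ln (nn ^+ 2) <= ln (mm ^+ 3) by rewrite ler_ln ?posrE ?exprn_gt0.
  by move: h'; rewrite !lnXn // -(mulr_natl (ln nn) 2) -(mulr_natl (ln mm) 3).
have F5 : 4 * sr ^+ 2 * Ln <= nn.
  have h1 : 1 + Ln ^+ 2 / 2 <= nn.
    have := expR_ge1Dxn 1 (ltW Ln0); rewrite /Ln lnK ?posrE //.
  have h2 : (4 * sr ^+ 2 * Ln) ^+ 2 <= nn ^+ 2.
    have -> : (4 * sr ^+ 2 * Ln) ^+ 2 = 16 * sr ^+ 4 * Ln ^+ 2.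
      by ring.
    apply: le_trans (_ : 16 * sr ^+ 4 * (2 * nn) <= _).
      apply: ler_wpM2l; first by rewrite mulr_ge0 // exprn_ge0 // ltW.
      move: h1; clear; lra.
    rewrite expr2 mulrA; apply: ler_wpM2r; first lra.
    move: n32; clear; lra.
  have X0 : 0 <= 4 * sr ^+ 2 * Ln.
    apply: mulr_ge0; last exact: ltW.
    by apply: mulr_ge0 => //; apply: exprn_ge0; apply: ltW.
  by move: h2; rewrite ler_sqr ?nnegrE // ltW.
have := key_ineq a0 m3 hnm Lm0 Ln0 F1 F2 F3 F4 F5.
move: hln; clear; lra.
Qed.

End Part4.


Theorem lemma3p5 (R : realType) (p : R) (r s : nat)
  (EQ : {set {set 'I_s}}) (P : graph_property)
  (H : forall n : nat, {set {set 'I_n}}) (x : forall n : nat, 'I_n -> R) :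
  1 < p -> (2 <= r)%N -> (r <= s)%N -> is_rgraph r EQ ->
  hereditary r P ->
  (exists L : R, 0 < L /\ (fun n => lamQP_seq p EQ P n) @ \oo --> L) ->
  (forall n, (s <= n)%N ->
     [/\ P n (H n), lamQH p EQ (H n) = lamQPn p EQ P n &
         principal_eigvec p EQ (H n) (x n)]) ->
  forall N : nat, exists n : nat,
    [/\ (N <= n)%N, (s <= n)%N &
      xmin (x n) `^ p >=
        (n%:R)^-1 * (1 - p / ((p - 1) * s%:R * ln (n%:R : R)))].
Proof.
move=> p1 r2 rs EQr hP [L [L0 hL]] hH N.
apply/not_existsP => hcon.
have contra n : (N <= n)%N -> (s <= n)%N ->
    xmin (x n) `^ p < (n%:R)^-1 * (1 - p / ((p - 1) * s%:R * ln (n%:R : R))).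
  move=> hN hs; rewrite ltNge; apply/negP => h; exact: (hcon n).
have p0 : 0 < p by lra.
have s2 : (2 <= s)%N by apply: leq_trans rs.
have [N1 _ hN1] : \forall n \near \oo, L / 2 < lamQP_seq p EQ P n.
  by apply: (cvgr_gt L hL); lra.
have lam_pos n : (N1 <= n)%N -> (0 < n)%N -> 0 < lamQPn p EQ P n.
  move=> hn n0; have := hN1 n hn; rewrite /lamQP_seq.
  have c0 : 0 < (n%:R : R) `^ (s%:R / p - s%:R) by rewrite powR_gt0 // ltr0n.
  move=> h; have : 0 < lamQPn p EQ P n * (n%:R : R) `^ (s%:R / p - s%:R) by lra.
  by rewrite pmulr_lgt0.
pose ell (n : nat) : R := ln (lamQPn p EQ P n) - (s%:R - s%:R / p) * ln (n%:R : R)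
   + ln (ln (n%:R : R)) / 4.
pose M0 := (N + N1 + 32 * s ^ 4 + 3 + 2 * s)%N.
have step m : (M0 <= m)%N -> ell m.+1 <= ell m.
  move=> hm.
  have hsn : (s <= m.+1)%N by rewrite /M0 in hm; lia.
  have hNn : (N <= m.+1)%N by rewrite /M0 in hm; lia.
  have m0 : (0 < m)%N by rewrite /M0 in hm; lia.
  have [k hk] := xmin_attained (x m.+1) (ltn0Sn m).
  have [hPn hlam hpe] := hH m.+1 hsn.
  have tu := contra m.+1 hNn hsn; rewrite hk in tu.
  have Ln0 : 0 <= ln (m.+1%:R : R) by rewrite ln_ge0 // ler1n.
  have T1 : x m.+1 k `^ p < 1.
    apply: lt_le_trans tu _.
    have c0 : 0 <= p / ((p - 1) * s%:R * ln (m.+1%:R : R)).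
      apply: divr_ge0; first lra.
      apply: mulr_ge0 => //; apply: mulr_ge0; [lra | exact: ler0n].
    rewrite mulrC; apply: le_trans (_ : 1 * (m.+1%:R)^-1 <= _).
      by rewrite ler_wpM2r ?invr_ge0 //; lra.
    by rewrite mul1r invf_le1 ?ler1n ?ltr0n.
  have j0 : 'I_m := Ordinal m0.
  have hdel := deletion (k := k) (H := H m.+1) j0 p1 hP hPn hpe T1.
  rewrite hlam in hdel.
  have hNm1 : (N1 <= m)%N by rewrite /M0 in hm; lia.
  apply: (step_real p1 _ (lam_pos _ (leq_trans hNm1 (leqnSn m)) (ltn0Sn m))
     (lam_pos _ hNm1 m0) hdel (powR_ge0 _ _) tu).
  - by rewrite ler1n; lia.
  - by rewrite -addn1 natrD.
  - by rewrite ler_nat; rewrite /M0 in hm; lia.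
  - by rewrite -natrM ler_nat; rewrite /M0 in hm; lia.
  - by rewrite -natrX -natrM ler_nat; rewrite /M0 in hm; lia.
have mono d : ell (M0 + d)%N <= ell M0.
  elim: d => [|d IH]; first by rewrite addn0.
  by rewrite addnS; apply: le_trans IH; apply: step; rewrite leq_addr.
set K := 4 * (ell M0 - ln (L / 2)).
pose B := Num.Def.archi_bound (expR (expR K)).
pose n := (M0 + N1 + B + 1)%N.
have hn : n = (M0 + (N1 + B + 1))%N by rewrite /n; lia.
have n0 : (0 < n)%N by rewrite /n; lia.
have hN1n : (N1 <= n)%N by rewrite /n; lia.
have lpos := lam_pos n hN1n n0.
have nR0 : 0 < (n%:R : R) by rewrite ltr0n.
have hB : expR (expR K) < n%:R.
  apply: lt_le_trans (archi_boundP (ltW (expR_gt0 _))) _.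
  by rewrite ler_nat /n; lia.
have hlnn : expR K < ln (n%:R : R).
  by rewrite -[X in X < _]expRK ltr_ln ?posrE ?expR_gt0.
have lnn0 : 0 < ln (n%:R : R) by apply: lt_trans hlnn; exact: expR_gt0.
have hK : K < ln (ln (n%:R : R)).
  by rewrite -[X in X < _]expRK ltr_ln ?posrE ?expR_gt0.
have hseq := hN1 n hN1n.
have hL2 : 0 < L / 2 by lra.
have c0 : 0 < (n%:R : R) `^ (s%:R / p - s%:R) by rewrite powR_gt0.
have hln : ln (L / 2) < ln (lamQPn p EQ P n) - (s%:R - s%:R / p) * ln (n%:R : R).
  have : ln (L / 2) < ln (lamQP_seq p EQ P n).
    by rewrite ltr_ln ?posrE // (lt_trans hL2 hseq).
  have -> : ln (lamQP_seq p EQ P n) = ln (lamQPn p EQ P n) - (s%:R - s%:R / p) * ln (n%:R : R).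
    rewrite /lamQP_seq lnM ?posrE // ln_powR; ring.
  by [].
have hm := mono (N1 + B + 1)%N; rewrite -hn in hm.
have eK : K = 4 * (ell M0 - ln (L / 2)) by [].
have en : ell n = ln (lamQPn p EQ P n) - (s%:R - s%:R / p) * ln (n%:R : R)
   + ln (ln (n%:R : R)) / 4 by [].
move: hm hK hln; rewrite en eK; clearbody ell K; lra.
Qed.
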